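(* Suppose the access structure $\mathcal{A}\subseteq 2^P$ is connected and the polymatroid $\mathcal M=(f,sP)$ realizes $\mathcal{A}$. If $i\in P$ satisfies $f(i)=f(s)$, then $\mathcal M$ is tight at $i$, i.e. $f(sP)=f(sP\setminus\{i\})$.
   Context: A polymatroid $(f,M)$ consists of a finite set $M$ and a function $f$ on subsets of $M$ with $f(\emptyset)=0$ that is non-negative, monotone and submodular. It is tight at $i\in M$ if $f(M)=f(M\setminus\{i\})$. An access structure on a finite set $P$ is a non-empty upward-closed $\mathcal{A}\subseteq 2^P$ with $\emptyset\notin\mathcal{A}$. A participant $i$ is important if some $A\notin\mathcal{A}$ has $A\cup\{i\}\in\mathcal{A}$; $\mathcal{A}$ is connected if every participant is important. Let $s\notin P$; juxtaposition denotes union. A polymatroid $(f,sP)$ realizes $\mathcal{A}$ if for every $A\subseteq P$: $A\in\mathcal{A}$ iff $f(sA)=f(A)$, and $A\notin\mathcal{A}$ iff $f(sA)=f(A)+f(s)$. *)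

(* Defs.v *)
From HB Require Import structures.
From mathcomp Require Import all_boot all_order all_algebra.
Set Implicit Arguments. Unset Strict Implicit. Unset Printing Implicit Defensive.
Import Order.TTheory GRing.Theory Num.Theory.
Local Open Scope ring_scope.

(* Polymatroid (f, M): ground set M : {set T}, f defined on subsets of M
   (values of f outside subsets of M are irrelevant), real-valued. *)
Definition polymatroid (R : realFieldType) (T : finType)
    (f : {set T} -> R) (M : {set T}) : Prop :=
  [/\ f set0 = 0,
      (forall A : {set T}, A \subset M -> 0 <= f A),
      (forall A B : {set T}, A \subset B -> B \subset M -> f A <= f B) &
      (forall A B : {set T}, A \subset M -> B \subset M ->
         f (A :|: B) + f (A :&: B) <= f A + f B)].

Definition tight_at (R : realFieldType) (T : finType)
    (f : {set T} -> R) (M : {set T}) (i : T) : Prop :=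
  f M = f (M :\ i).

Definition access_structure (T : finType) (P : {set T}) (A : {set {set T}}) : Prop :=
  [/\ (forall X : {set T}, X \in A -> X \subset P),
      A != set0,
      set0 \notin A &
      (forall X Y : {set T}, X \in A -> X \subset Y -> Y \subset P -> Y \in A)].

Definition important (T : finType) (P : {set T}) (A : {set {set T}}) (i : T) : Prop :=
  exists X : {set T}, [/\ X \subset P, X \notin A & i |: X \in A].

Definition connected_as (T : finType) (P : {set T}) (A : {set {set T}}) : Prop :=
  forall i, i \in P -> important P A i.

Definition realizes (R : realFieldType) (T : finType) (f : {set T} -> R)
    (s : T) (P : {set T}) (A : {set {set T}}) : Prop :=
  forall X : {set T}, X \subset P ->
    (X \in A <-> f (s |: X) = f X) /\ (X \notin A <-> f (s |: X) = f X + f [set s]).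

(* Main.v *)
Require Import Defs.
From HB Require Import structures.
From mathcomp Require Import all_boot all_order all_algebra.
Import Order.TTheory GRing.Theory Num.Theory.
Local Open Scope ring_scope.

Theorem corollary2p3 (R : realFieldType) (T : finType) (s : T) (P : {set T})
    (A : {set {set T}}) (f : {set T} -> R) (i : T) :
  s \notin P ->
  access_structure P A ->
  connected_as P A ->
  polymatroid f (s |: P) ->
  realizes f s P A ->
  i \in P ->
  f [set i] = f [set s] ->
  tight_at f (s |: P) i.
Proof.
move=> sP [AP _ _ _] conn [f0 fge fmono fsub] real iP fis.
have [X [XP XA iXA]] := conn i iP.
have iX : i \notin X.
  apply/negP=> iX; move: XA; have -> : X = i |: X by apply/esym/setUidPr; rewrite sub1set.
  by rewrite iXA.
have si : s != i by apply/eqP=> e; move: sP; rewrite e iP.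
have iXP : i |: X \subset P by rewrite subUset sub1set iP XP.
have sPP : s |: P \subset s |: P by [].
have [_ [h1 _]] := real X XP.
have e1 := h1 XA.
have [[h2 _] _] := real _ iXP.
have e2 := h2 iXA.
have XsP : X \subset s |: P by apply: subset_trans XP (subsetUr _ _).
have isP : [set i] \subset s |: P by rewrite sub1set !inE iP orbT.
have hsub := fsub _ _ isP XsP.
have e3 : [set i] :|: X = i |: X by [].
have e4 : [set i] :&: X = set0.
  apply/setP=> y; rewrite !inE; apply/negP=> /andP[/eqP -> ]; exact/negP.
rewrite e4 f0 addr0 in hsub.
have sXsP : s |: X \subset s |: P by rewrite setUS.
have siXsP : i |: (s |: X) \subset s |: P by rewrite subUset sub1set !inE iP orbT sXsP.
have m1 : f (s |: X) <= f (i |: (s |: X)) by apply: fmono => //; exact: subsetUr.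
have e5 : i |: (s |: X) = s |: (i |: X) by rewrite setUCA.
have eq1 : f (i |: (s |: X)) = f (s |: X) by apply/eqP; rewrite eq_le m1 andbT e5 e2 e1 -fis addrC.
have DsP : (s |: P) :\ i \subset s |: P by exact: subsetDl.
have hs := fsub _ _ DsP siXsP.
have eU : (s |: P) :\ i :|: (i |: (s |: X)) = s |: P.
  apply/setP=> y; rewrite !inE; case: (y =P i) => [->|] /=; first by rewrite iP orbT.
  move=> _; case: (y =P s) => //= _; case yP: (y \in P) => //=.
  by apply/negP=> yX; move: yP; rewrite (subsetP XP).
have eI : ((s |: P) :\ i) :&: (i |: (s |: X)) = s |: X.
  apply/setP=> y; rewrite !inE; case: (y =P i) => [->|] /=.
    by rewrite (negbTE iX) orbF eq_sym (negbTE si).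
  move=> _; case: (y =P s) => //= _; case yX: (y \in X); rewrite ?andbF //.
  by rewrite (subsetP XP).
rewrite eU eI eq1 in hs.
rewrite /tight_at; apply/eqP; rewrite eq_le; apply/andP; split.
  by rewrite -(lerD2r (f (s |: X))).
by apply: fmono.
Qed.
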